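(* (a) Let $\phi$ be a tree formula over $A$, let $\Psi$ be the set of forest formulas of $\phi$, and suppose $\Psi$ is recognized by a homomorphism $\alpha:A^{\Delta}\to(H,V)$. Then the language defined by $\mathsf{EX}\phi$ is recognized by a homomorphism $\alpha\otimes\beta:A^{\Delta}\to(H,V)\circ(H',V')$ for some 1-definite homomorphism $\beta:(A\times H)^{\Delta}\to(H',V')$. (b) Suppose $L\subseteq H_A$ is recognized by a homomorphism $\alpha\otimes\beta:A^{\Delta}\to(H,V)\circ(H',V')$, where $\beta:(A\times H)^{\Delta}\to(H',V')$ is 1-definite, and suppose every language recognized by $\alpha$ is defined by a formula in some set $\Psi$ of forest formulas. Then $L$ is a boolean combination of languages of the form $L_\psi$ and $L_{\mathsf{EX}(a\wedge\psi)}$ with $\psi\in\Psi$ and $a\in A$.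
   Context: $A^{\Delta}=(H_A,V_A)$: free forest algebra over finite alphabet $A$ ($H_A$ forests = finite ordered sequences of finite ordered $A$-labelled trees under concatenation; $V_A$ contexts with one hole, acting by substitution); $as$ is the tree with root $a$ and child forest $s$. A forest algebra: additive monoid $H$, monoid $V$ acting faithfully on the left, containing $g\mapsto g+h$, $g\mapsto h+g$; finite forest algebras are assumed to have $H$ idempotent and commutative. A homomorphism $\gamma$ recognizes $L\subseteq H_A$ if $L=\gamma^{-1}(X)$ for some $X$. Wreath product: $(H,V)\circ(H',V')=(H\times H',V\times V'^{H})$, $(v,f)(h,h')=(vh,f(h)h')$; $\alpha\otimes\beta$ maps $a$ to $(\alpha(a),h\mapsto\beta(a,h))$, so that $\alpha\otimes\beta(s)=(\alpha(s),\beta(s^\alpha))$ where $s^\alpha$ relabels each node with subtree $at$ by $(a,\alpha(t))$. $\beta$ is 1-definite if $\beta(s)$ depends only on the set of labels of root nodes of $s$. Logic: tree and forest formulas are defined mutually: $\mathbf T$ is a forest formula; each $a\in A$ is a tree formula; forest formulas are tree formulas; both classes are closed under boolean operations; for a tree formula $\phi$, $\mathsf{EF}\phi$ and $\mathsf{EX}\phi$ are forest formulas. Semantics: all forests satisfy $\mathbf T$; $as\models_t a$; for a forest formula $\phi$, $as\models_t\phi$ iff $s\models\phi$; booleans usual; $s\models\mathsf{EF}\phi$ iff some subtree rooted at a node of $s$ satisfies $\phi$ as a tree; $s\models\mathsf{EX}\phi$ iff some subtree rooted at a root node of $s$ satisfies $\phi$. $L_\psi=\{s\in H_A:s\models\psi\}$.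 Every tree formula $\phi$ can be written as $\bigvee_{a\in A}(a\wedge\psi_a)$ with forest formulas $\psi_a$; $\Psi=\{\psi_a:a\in A\}$ is the set of forest formulas of $\phi$. A homomorphism recognizes $\Psi$ if $\alpha(s)$ determines exactly which formulas of $\Psi$ are satisfied by $s$. *)

(* Defs.v *)
From mathcomp Require Import all_boot.
From Stdlib Require List.

Set Implicit Arguments.
Unset Strict Implicit.
Unset Printing Implicit Defensive.

Inductive tree (S : Type) : Type := Node : S -> seq (tree S) -> tree S.
Arguments Node {S}.

Definition forest (S : Type) := seq (tree S).

Definition label {S} (t : tree S) : S := let: Node a _ := t in a.

(* contexts = forests with exactly one hole (a leaf) *)
Inductive context (S : Type) : Type :=
  Ctx : forest S -> hole_tree S -> forest S -> context S
with hole_tree (S : Type) : Type :=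
  | Hole : hole_tree S
  | HNode : S -> context S -> hole_tree S.
Arguments Ctx {S}.
Arguments Hole {S}.
Arguments HNode {S}.

Fixpoint fill {S} (p : context S) (s : forest S) : forest S :=
  let: Ctx l h r := p in l ++ fill_h h s ++ r
with fill_h {S} (h : hole_tree S) (s : forest S) : forest S :=
  match h with
  | Hole => s
  | HNode a c => [:: Node a (fill c s)]
  end.

(* composition of contexts: (ctx_comp p q) = p with q put into its hole *)
Fixpoint ctx_comp {S} (p q : context S) : context S :=
  match p with
  | Ctx l Hole r => let: Ctx l' h' r' := q in Ctx (l ++ l') h' (r' ++ r)
  | Ctx l (HNode a c) r => Ctx l (HNode a (ctx_comp c q)) r
  end.

Definition ctx1 {S} : context S := Ctx [::] Hole [::].

Definition ctx_letter {S} (a : S) : context S := Ctx [::] (HNode a ctx1) [::].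

Fixpoint subtrees_t {S} (t : tree S) : seq (tree S) :=
  let: Node _ c := t in
  t :: (fix go (s : seq (tree S)) : seq (tree S) :=
          match s with [::] => [::] | u :: r => subtrees_t u ++ go r end) c.

Definition subtrees {S} (s : forest S) : seq (tree S) := flatten (map subtrees_t s).

Record forest_algebra := FAlg {
  fH : Type;
  fV : Type;
  fadd : fH -> fH -> fH;
  fzero : fH;
  fmul : fV -> fV -> fV;
  fone : fV;
  fact : fV -> fH -> fH;
  faddA : forall x y z, fadd x (fadd y z) = fadd (fadd x y) z;
  fadd0l : forall x, fadd fzero x = x;
  fadd0r : forall x, fadd x fzero = x;
  fmulA : forall u v w, fmul u (fmul v w) = fmul (fmul u v) w;
  fmul1l : forall v, fmul fone v = v;
  fmul1r : forall v, fmul v fone = v;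
  fact_mul : forall v w h, fact (fmul v w) h = fact v (fact w h);
  fact_one : forall h, fact fone h = h;
  fact_faithful : forall v w, (forall h, fact v h = fact w h) -> v = w;
  fins_l : forall h, exists v, forall g, fact v g = fadd g h;
  fins_r : forall h, exists v, forall g, fact v g = fadd h g
}.

(* finite forest algebra: H and V finite, H idempotent and commutative
   (the standing convention of the paper) *)
Definition finite_falg (F : forest_algebra) : Prop :=
  (exists l : seq (fH F), forall x, List.In x l) /\
  (exists l : seq (fV F), forall v, List.In v l) /\
  (forall x : fH F, fadd x x = x) /\
  (forall x y : fH F, fadd x y = fadd y x).

Record fhom (S : Type) (F : forest_algebra) := FHom {
  homH : forest S -> fH F;
  homV : context S -> fV F;
  homH0 : homH [::] = fzero F;
  homHD : forall s t, homH (s ++ t) = fadd (homH s) (homH t);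
  homV1 : homV ctx1 = fone F;
  homVM : forall p q, homV (ctx_comp p q) = fmul (homV p) (homV q);
  homA : forall p s, homH (fill p s) = fact (homV p) (homH s)
}.

Definition hletter {S F} (g : fhom S F) (a : S) : fV F := homV g (ctx_letter a).

Definition recognizes {S X : Type} (g : forest S -> X) (L : forest S -> Prop) : Prop :=
  exists P : X -> Prop, forall s, L s <-> P (g s).

Definition one_definite {S F} (b : fhom S F) : Prop :=
  forall s t : forest S,
    (forall x, List.In x (map label s) <-> List.In x (map label t)) ->
    homH b s = homH b t.

(* the value on forests of the unique homomorphism out of S^Delta
   sending each letter a to f a, in a structure (0, +, action) *)
Fixpoint ext_tree {S H V : Type} (zero : H) (add : H -> H -> H)
    (act : V -> H -> H) (f : S -> V) (t : tree S) : H :=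
  let: Node a c := t in
  act (f a) ((fix go (s : seq (tree S)) : H :=
                match s with
                | [::] => zero
                | u :: r => add (ext_tree zero add act f u) (go r)
                end) c).

Definition ext_forest {S H V : Type} (zero : H) (add : H -> H -> H)
    (act : V -> H -> H) (f : S -> V) (s : forest S) : H :=
  foldr (fun t acc => add (ext_tree zero add act f t) acc) zero s.

Definition wr_zero (F F' : forest_algebra) : fH F * fH F' := (fzero F, fzero F').
Definition wr_add (F F' : forest_algebra) (x y : fH F * fH F') : fH F * fH F' :=
  (fadd x.1 y.1, fadd x.2 y.2).
Definition wr_act (F F' : forest_algebra) (vf : fV F * (fH F -> fV F'))
    (x : fH F * fH F') : fH F * fH F' :=
  (fact vf.1 x.1, fact (vf.2 x.1) x.2).

Definition wreath_H {A : Type} {F F' : forest_algebra}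
    (alpha : fhom A F) (beta : fhom (A * fH F) F') (s : forest A) : fH F * fH F' :=
  ext_forest (wr_zero F F') (@wr_add F F') (@wr_act F F')
    (fun a => (hletter alpha a, fun h => hletter beta (a, h))) s.

Inductive tform (A : Type) : Type :=
  | TLetter : A -> tform A
  | TForest : fform A -> tform A
  | TNot : tform A -> tform A
  | TAnd : tform A -> tform A -> tform A
  | TOr : tform A -> tform A -> tform A
with fform (A : Type) : Type :=
  | FTrue : fform A
  | FNot : fform A -> fform A
  | FAnd : fform A -> fform A -> fform A
  | FOr : fform A -> fform A -> fform A
  | FEF : tform A -> fform A
  | FEX : tform A -> fform A.
Arguments TLetter {A}. Arguments TForest {A}. Arguments TNot {A}.
Arguments TAnd {A}. Arguments TOr {A}.
Arguments FTrue {A}. Arguments FNot {A}. Arguments FAnd {A}.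
Arguments FOr {A}. Arguments FEF {A}. Arguments FEX {A}.

Fixpoint sat_t {A : Type} (phi : tform A) (t : tree A) : Prop :=
  match phi with
  | TLetter b => label t = b
  | TForest psi => let: Node _ s := t in sat_f psi s
  | TNot p => ~ sat_t p t
  | TAnd p q => sat_t p t /\ sat_t q t
  | TOr p q => sat_t p t \/ sat_t q t
  end
with sat_f {A : Type} (psi : fform A) (s : forest A) : Prop :=
  match psi with
  | FTrue => True
  | FNot p => ~ sat_f p s
  | FAnd p q => sat_f p s /\ sat_f q s
  | FOr p q => sat_f p s \/ sat_f q s
  | FEF p => exists t, List.In t (subtrees s) /\ sat_t p t
  | FEX p => exists t, List.In t s /\ sat_t p t
  end.

Definition lang {A : Type} (psi : fform A) : forest A -> Prop := fun s => sat_f psi s.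

Inductive boolcomb {A : Type} (G : (forest A -> Prop) -> Prop) : (forest A -> Prop) -> Prop :=
  | bc_base : forall K, G K -> boolcomb G K
  | bc_not : forall K, boolcomb G K -> boolcomb G (fun s => ~ K s)
  | bc_and : forall K1 K2, boolcomb G K1 -> boolcomb G K2 -> boolcomb G (fun s => K1 s /\ K2 s)
  | bc_or : forall K1 K2, boolcomb G K1 -> boolcomb G K2 -> boolcomb G (fun s => K1 s \/ K2 s).

(* Main.v *)
Require Import Defs.
From mathcomp Require Import all_boot.
From Stdlib Require List.
From Stdlib Require Import ClassicalEpsilon.

Set Implicit Arguments.
Unset Strict Implicit.
Unset Printing Implicit Defensive.

Section TreeInd.
Variable S : Type.
Variable P : tree S -> Prop.
Hypothesis HN : forall a c, (forall t, List.In t c -> P t) -> P (Node a c).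
Fixpoint tree_ind2 (t : tree S) : P t :=
  let: Node a c := t in HN a
   ((fix go (c : seq (tree S)) : forall u, List.In u c -> P u :=
    match c return forall u, List.In u c -> P u with
    | [::] => fun u (H : List.In u [::]) => match H with end
    | v :: r => fun u (H : List.In u (v :: r)) =>
        match H with
        | or_introl e => eq_ind v P (tree_ind2 v) u e
        | or_intror H' => go r u H'
        end
    end) c).
End TreeInd.

Lemma In_map_iff' (X Y : Type) (f : X -> Y) (s : seq X) y :
  List.In y (map f s) <-> exists x, f x = y /\ List.In x s.
Proof.
elim: s => [|x s IH] /=; first by split => // [[x []]].
split.
- case=> [<-|/IH [z [e H]]]; first by exists x; auto.
  by exists z; auto.
- case=> z [e [->|H]]; first by left.
  by right; apply/IH; exists z.
Qed.

Lemma has_In (X : Type) (p : pred X) (s : seq X) :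
  has p s <-> exists x, List.In x s /\ p x.
Proof.
elim: s => [|x s IH] /=; first by split => // [[x []]].
split.
- case/orP => [H|/IH [z [H1 H2]]]; first by exists x; auto.
  by exists z; auto.
- case=> z [[<-|H] pz]; first by rewrite pz.
  by apply/orP; right; apply/IH; exists z.
Qed.

Lemma In_of_mem (X : eqType) (x : X) (s : seq X) : x \in s -> List.In x s.
Proof.
elim: s => // y s IH; rewrite in_cons => /orP [/eqP ->|H]; first by left.
by right; apply: IH.
Qed.

Definition children {S} (t : tree S) : forest S := let: Node _ c := t in c.

Section Relabel.
Variables (A : Type) (F F' : forest_algebra) (alpha : fhom A F)
  (beta : fhom (A * fH F) F').

Fixpoint relabel_t (t : tree A) : tree (A * fH F) :=
  let: Node a c := t in Node (a, homH alpha c) (map relabel_t c).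

Definition fW := (fun a => (hletter alpha a, fun h => hletter beta (a, h))).

Lemma go_ext (c : seq (tree A)) :
  (fix go (s : seq (tree A)) : fH F * fH F' :=
     match s with
     | [::] => wr_zero F F'
     | u :: r => wr_add (ext_tree (wr_zero F F') (@wr_add F F') (@wr_act F F') fW u) (go r)
     end) c = ext_forest (wr_zero F F') (@wr_add F F') (@wr_act F F') fW c.
Proof. by elim: c => //= u r ->. Qed.

Lemma forest_step (c : seq (tree A)) :
  (forall u, List.In u c ->
     ext_tree (wr_zero F F') (@wr_add F F') (@wr_act F F') fW u
     = (homH alpha [:: u], homH beta [:: relabel_t u])) ->
  ext_forest (wr_zero F F') (@wr_add F F') (@wr_act F F') fW c
  = (homH alpha c, homH beta (map relabel_t c)).
Proof.
elim: c => [|u r IH] H /=.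
  by rewrite !homH0.
rewrite /ext_forest /= -/(ext_forest _ _ _ _ r).
rewrite H; last by left.
rewrite IH; last by move=> v Hv; apply: H; right.
rewrite /wr_add /=.
by rewrite -(homHD alpha [:: u] r) -(homHD beta [:: relabel_t u]).
Qed.

Lemma tree_main (t : tree A) :
  ext_tree (wr_zero F F') (@wr_add F F') (@wr_act F F') fW t
  = (homH alpha [:: t], homH beta [:: relabel_t t]).
Proof.
elim/tree_ind2: t => a c IH.
have E := forest_step IH.
rewrite /= go_ext E /wr_act /=.
have H1 := homA alpha (ctx_letter a) c.
have H2 := homA beta (ctx_letter (a, homH alpha c)) (map relabel_t c).
rewrite /= cats0 in H1; rewrite /= cats0 in H2.
by rewrite H1 H2.
Qed.

Lemma wreath_main (s : forest A) :
  wreath_H alpha beta s = (homH alpha s, homH beta (map relabel_t s)).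
Proof. apply: forest_step => u _; exact: tree_main. Qed.

End Relabel.

Definition bmul (u v : option bool) : option bool := if u is Some b then Some b else v.
Definition bact (v : option bool) (h : bool) : bool := if v is Some b then b else h.

Lemma bF_faddA : forall x y z : bool, x || (y || z) = (x || y) || z.
Proof. by case; case; case. Qed.
Lemma bF_fadd0l : forall x : bool, false || x = x. Proof. by []. Qed.
Lemma bF_fadd0r : forall x : bool, x || false = x. Proof. by case. Qed.
Lemma bF_fmulA : forall u v w, bmul u (bmul v w) = bmul (bmul u v) w.
Proof. by case=> [b|] [c|] [d|]. Qed.
Lemma bF_fmul1l : forall v, bmul None v = v. Proof. by []. Qed.
Lemma bF_fmul1r : forall v, bmul v None = v. Proof. by case. Qed.
Lemma bF_fact_mul : forall v w h, bact (bmul v w) h = bact v (bact w h).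
Proof. by case=> [b|] [c|]. Qed.
Lemma bF_fact_one : forall h, bact None h = h. Proof. by []. Qed.
Lemma bF_faithful : forall v w, (forall h, bact v h = bact w h) -> v = w.
Proof.
case=> [b|] [c|] H //.
- by move: (H b) => /= E; rewrite E.
- by move: (H (~~ b)) => /=; case: (b).
- by move: (H (~~ c)) => /=; case: (c).
Qed.
Lemma bF_fins_l : forall h, exists v, forall g, bact v g = g || h.
Proof. case; [exists (Some true) | exists None] => g; by case: g. Qed.
Lemma bF_fins_r : forall h, exists v, forall g, bact v g = h || g.
Proof. case; [exists (Some true) | exists None] => g; by case: g. Qed.

Definition BF : forest_algebra :=
  @FAlg bool (option bool) orb false bmul None bact bF_faddA bF_fadd0l bF_fadd0r
    bF_fmulA bF_fmul1l bF_fmul1r bF_fact_mul bF_fact_one bF_faithful bF_fins_l bF_fins_r.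

Lemma BF_finite : finite_falg BF.
Proof.
split; first by exists [:: false; true] => x; case: x; simpl; auto.
split; first by exists [:: None; Some false; Some true] => x; case: x => [[]|]; simpl; auto.
by split => [x|x y] /=; case: x => //; case: y.
Qed.

Section BetaG.
Variables (S : Type) (g : S -> bool).
Definition gl (t : tree S) := g (label t).
Definition bH (s : forest S) : bool := has gl s.
Definition bV (p : context S) : option bool :=
  let: Ctx l h r := p in
  match h with
  | Hole => if has gl l || has gl r then Some true else None
  | HNode x _ => Some (has gl l || g x || has gl r)
  end.

Lemma bH0 : bH [::] = false. Proof. by []. Qed.
Lemma bHD s t : bH (s ++ t) = bH s || bH t. Proof. by rewrite /bH has_cat. Qed.
Lemma bV1 : bV ctx1 = None. Proof. by []. Qed.
Lemma bVM p q : bV (ctx_comp p q) = bmul (bV p) (bV q).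
Proof.
case: p => l [|x c] r; case: q => l' [|y d] r' /=; rewrite ?has_cat.
- by case: (has gl l); case: (has gl r); case: (has gl l'); case: (has gl r').
- by case: (has gl l); case: (has gl r); case: (has gl l'); case: (has gl r'); case: (g y).
- by [].
- by [].
Qed.
Lemma bA p s : bH (fill p s) = bact (bV p) (bH s).
Proof.
case: p => l [|x c] r /=; rewrite /bH !has_cat /=.
- by case: (has gl l); case: (has gl r); case: (has gl s).
- by rewrite orbA.
Qed.

Definition betaG : fhom S BF := @FHom S BF bH bV bH0 bHD bV1 bVM bA.

Lemma betaG_1def : one_definite betaG.
Proof.
move=> s t H /=.
have E : forall u, bH u = true <-> exists x, List.In x (map label u) /\ g x.
  move=> u; change (is_true (bH u) <-> exists x, List.In x (map label u) /\ g x); rewrite /bH has_In; split.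
  - case=> y [Hy gy]; exists (label y); split => //.
    by apply/In_map_iff'; exists y.
  - case=> x [/In_map_iff' [y [<- Hy]] gx]; by exists y.
apply/idP/idP => [/E [x [Hx gx]]|/E [x [Hx gx]]]; apply/E; exists x; split => //; by apply/H.
Qed.
End BetaG.

Definition asb (P : Prop) : bool := if excluded_middle_informative P then true else false.
Lemma asbP (P : Prop) : asb P = true <-> P.
Proof. rewrite /asb; case: excluded_middle_informative => //; split => //. Qed.

Section PartB.
Variables (A : finType) (F F' : forest_algebra) (alpha : fhom A F).
Variable G : (forest A -> Prop) -> Prop.

Lemma bc_det (X : Type) (keys : seq X) (Kf : X -> forest A -> Prop)
  (hK : forall x, boolcomb G (Kf x))
  (base : forall L, (forall s t, homH alpha s = homH alpha t -> (L s <-> L t)) ->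
     exists K, boolcomb G K /\ forall s, L s <-> K s) :
  forall L, (forall s t, homH alpha s = homH alpha t ->
      (forall x, List.In x keys -> (Kf x s <-> Kf x t)) -> (L s <-> L t)) ->
  exists K, boolcomb G K /\ forall s, L s <-> K s.
Proof.
elim: keys => [|x keys IH] L HL.
  by apply: base => s t E; apply: HL.
pose L1 s := exists t, Kf x t /\ L t /\ homH alpha t = homH alpha s /\
   forall y, List.In y keys -> (Kf y t <-> Kf y s).
pose L2 s := exists t, ~ Kf x t /\ L t /\ homH alpha t = homH alpha s /\
   forall y, List.In y keys -> (Kf y t <-> Kf y s).
have [K1 [B1 E1]] : exists K, boolcomb G K /\ forall s, L1 s <-> K s.
  apply: IH => s t E HK; split; case=> u [a [b [c d]]]; exists u;
   (split; [done|split; [done|split]]); try congruence;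
   move=> y Hy; rewrite (d y Hy) (HK y Hy) //.
have [K2 [B2 E2]] : exists K, boolcomb G K /\ forall s, L2 s <-> K s.
  apply: IH => s t E HK; split; case=> u [a [b [c d]]]; exists u;
   (split; [done|split; [done|split]]); try congruence;
   move=> y Hy; rewrite (d y Hy) (HK y Hy) //.
exists (fun s => (Kf x s /\ K1 s) \/ (~ Kf x s /\ K2 s)); split.
  apply: bc_or; apply: bc_and => //; exact: bc_not.
move=> s; split.
- move=> Ls; case: (classic (Kf x s)) => Hx.
  + by left; split => //; apply/E1; exists s; repeat split => //.
  + by right; split => //; apply/E2; exists s; repeat split => //.
- case=> [[Hx /E1 [t [Ht [Lt [Et Hk]]]]]|[Hx /E2 [t [Ht [Lt [Et Hk]]]]]].
  + apply/(HL s t) => //; last first.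
    move=> y [<-|Hy]; first by split.
    by symmetry; apply: Hk.
  + apply/(HL s t) => //; last first.
    move=> y [<-|Hy]; first by split => //.
    by symmetry; apply: Hk.
Qed.
End PartB.

Theorem proposition2 :
  (* (a) *)
  (forall (A : finType) (F : forest_algebra) (alpha : fhom A F)
          (phi : tform A) (psi : A -> fform A),
      finite_falg F ->
      (* psi a are the forest formulas of phi: phi == \/_a (a /\ psi_a) *)
      (forall (a : A) (s : forest A), sat_t phi (Node a s) <-> sat_f (psi a) s) ->
      (* alpha recognizes Psi = {psi_a | a in A} *)
      (forall s t : forest A, homH alpha s = homH alpha t ->
         forall a : A, sat_f (psi a) s <-> sat_f (psi a) t) ->
      exists (F' : forest_algebra) (beta : fhom (A * fH F) F'),
        finite_falg F' /\ one_definite beta /\ recognizes (wreath_H alpha beta) (lang (FEX phi)))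
  /\
  (* (b) *)
  (forall (A : finType) (F F' : forest_algebra) (alpha : fhom A F)
          (beta : fhom (A * fH F) F') (Psi : fform A -> Prop) (L : forest A -> Prop),
      finite_falg F -> finite_falg F' ->
      recognizes (wreath_H alpha beta) L ->
      one_definite beta ->
      (forall L' : forest A -> Prop, recognizes (homH alpha) L' ->
         exists psi, Psi psi /\ forall s, L' s <-> sat_f psi s) ->
      exists K : forest A -> Prop,
        boolcomb (fun K0 => exists psi, Psi psi /\
                    ((forall s, K0 s <-> lang psi s) \/
                     exists a : A, forall s, K0 s <-> lang (FEX (TAnd (TLetter a) (TForest psi))) s)) K
        /\ forall s, L s <-> K s).
Proof.
split.
- move=> A F alpha phi psi _ Hphi Hrec.
  pose g := fun x : A * fH F => asb (exists s, homH alpha s = x.2 /\ sat_f (psi x.1) s).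
  exists BF, (betaG g); split; first exact: BF_finite.
  split; first exact: betaG_1def.
  exists (fun x => x.2 = true) => s.
  rewrite wreath_main /= /bH has_map /lang /=; apply: iff_trans _ (iff_sym (has_In _ _)).
  split.
  + case=> t [Ht Pt]; exists t; split => //.
    case: t Ht Pt => a c Ht Pt.
    rewrite /preim /gl /= /g; apply/asbP; exists c; split => //.
    by apply/Hphi.
  + case=> t [Ht Pt]; exists t; split => //.
    case: t Ht Pt => a c Ht.
    rewrite /preim /gl /= /g => /asbP [s' [E Hs']].
    by apply/Hphi; apply/(Hrec _ _ E).
- move=> A F F' alpha beta Psi L [[lH HlH] _] _ [P HP] H1 HPsi.
  pose Kf := fun (x : A * fH F) (s : forest A) =>
    exists u, List.In u s /\ label u = x.1 /\ homH alpha (children u) = x.2.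
  set G := (fun K0 => exists psi, Psi psi /\ _).
  have hK : forall x, boolcomb G (Kf x).
    case=> a h.
    have [psi [Ps Epsi]] : exists psi, Psi psi /\ forall s, homH alpha s = h <-> sat_f psi s.
      by apply: HPsi; exists (fun y => y = h).
    apply: bc_base; exists psi; split => //; right; exists a => s.
    rewrite /Kf /lang /=; split.
    + case=> u [Hu [Hl Hc]]; exists u; split => //; split => //.
      by case: u Hu Hl Hc => b c /= _ _ /Epsi.
    + case=> u [Hu [Hl Hc]]; exists u; split => //; split => //.
      by case: u Hu Hl Hc => b c /= _ _ /Epsi.
  have base : forall L, (forall s t, homH alpha s = homH alpha t -> (L s <-> L t)) ->
     exists K, boolcomb G K /\ forall s, L s <-> K s.
    move=> L0 HL0.
    have [psi [Ps Epsi]] : exists psi, Psi psi /\ forall s, L0 s <-> sat_f psi s.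
      apply: HPsi; exists (fun y => exists s, homH alpha s = y /\ L0 s) => s.
      split; first by move=> Ls; exists s.
      by case=> t [E Lt]; apply/(HL0 s t).
    exists (lang psi); split => //.
    by apply: bc_base; exists psi; split => //; left.
  apply: (bc_det hK base (keys := List.list_prod (enum A) lH)).
  move=> s t E HK.
  rewrite !HP !wreath_main E.
  suff -> : homH beta (map (relabel_t alpha) s) = homH beta (map (relabel_t alpha) t) by [].
  apply: H1 => -[a h].
  have KE : forall u, List.In (a, h) (map label (map (relabel_t alpha) u)) <-> Kf (a, h) u.
    move=> u; rewrite In_map_iff'; split.
    - case=> v [Ev /In_map_iff' [w [Ew Hw]]]; subst v; exists w; split => //.
      by case: w Hw Ev => b c /= _ [-> ->].
    - case=> w [Hw [Hl Hc]]; exists (relabel_t alpha w); split.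
        by case: w Hw Hl Hc => b c /= _ -> <-.
      by apply/In_map_iff'; exists w.
  rewrite !KE; apply: HK.
  apply/List.in_prod; last exact: HlH.
  by apply: In_of_mem; rewrite mem_enum.
Qed.
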